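(* Fix an integer $n\ge 0$. Let $\mu,\nu,\lambda$ be partitions such that $\ell(\mu)>n$, $\ell(\nu)>n$, the border strip $R_\mu$ exists, is nonempty, and $\nu=\mu\setminus R_\mu$, and the border strip $R_\nu$ exists, is nonempty, and $\lambda=\nu\setminus R_\nu$. Then $c(R_\mu)>c(R_\nu)$.
   Context: For a partition $\lambda$ with $\ell(\lambda)>n$ (where $\ell$ is the number of nonzero parts), $R_\lambda$ denotes the border strip (connected skew Young diagram containing no $2\times2$ square) consisting of $2(\ell(\lambda)-n-1)$ boxes along the rim (south-east boundary) of the Young diagram of $\lambda$, starting at the first (leftmost) box of the last row of $\lambda$ and proceeding along the rim, if it exists. $c(R)$ denotes the number of columns occupied by a border strip $R$. *)

(* Defs.v *)
From mathcomp Require Import all_boot.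
Set Implicit Arguments. Unset Strict Implicit. Unset Printing Implicit Defensive.

(* A partition is a weakly decreasing sequence of positive naturals
   (its nonzero parts); ell(lambda) = size lambda. *)
Definition is_partition (s : seq nat) : bool :=
  sorted geq s && all (fun x => 0 < x) s.

(* Boxes are pairs (row, column), 0-indexed, English convention:
   row i contains columns 0 .. s_i - 1. *)
Definition in_diag (s : seq nat) (b : nat * nat) : bool := b.2 < nth 0 s b.1.

(* Walk along the rim (south-east boundary) from box (i,j) towards the
   north-east: go right if the box to the right is in the diagram,
   otherwise go up (if possible), otherwise stop. [fuel] bounds the length. *)
Fixpoint rim_from (s : seq nat) (fuel : nat) (b : nat * nat) : seq (nat * nat) :=
  match fuel with
  | 0 => [::]
  | f.+1 =>
      b :: (if b.2.+1 < nth 0 s b.1 then rim_from s f (b.1, b.2.+1)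
            else if b.1 is i'.+1 then rim_from s f (i', b.2) else [::])
  end.

(* The whole rim, starting at the first (leftmost) box of the last row.
   The rim has at most |s| = sumn s boxes, so this fuel suffices. *)
Definition rim (s : seq nat) : seq (nat * nat) :=
  if s is [::] then [::] else rim_from s (sumn s) ((size s).-1, 0).

(* R_lambda: the border strip of 2(ell(lambda) - n - 1) boxes along the rim,
   starting at the first box of the last row, if it exists. *)
Definition R_strip (n : nat) (s : seq nat) : option (seq (nat * nat)) :=
  let k := 2 * (size s - n - 1) in
  if k <= size (rim s) then Some (take k (rim s)) else None.

Definition ncols (R : seq (nat * nat)) : nat := size (undup (map snd R)).

Definition diag_remove (mu lam : seq nat) (R : seq (nat * nat)) : Prop :=
  forall b : nat * nat, in_diag lam b = in_diag mu b && (b \notin R).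

(* Main.v *)
Require Import Defs.
From mathcomp Require Import all_boot zify.

Lemma take_rim_from s f k b : take k (rim_from s f b) = rim_from s (minn k f) b.
Proof.
elim: f k b => [|f IH] [|k] [i j] //=.
rewrite minnSS /=; case: ifP => _; first by rewrite IH.
by case: i => [|i] //; rewrite IH.
Qed.

Lemma sorted_nthS s i : sorted geq s -> nth 0 s i.+1 <= nth 0 s i.
Proof.
elim: s i => [|x s IH] [|i] //=.
  by case: s IH => [|y s] //= _ /andP[].
move=> H; apply: IH; exact: path_sorted H.
Qed.
Lemma sorted_nth_mono s i j : sorted geq s -> i <= j -> nth 0 s j <= nth 0 s i.
Proof.
move=> Hs; elim: j => [|j IH]; first by rewrite leqn0 => /eqP->.
rewrite leq_eqVlt => /orP[/eqP->//|]; rewrite ltnS => /IH.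
by apply: leq_trans; apply: sorted_nthS.
Qed.

Lemma rim_diag s f b : sorted geq s -> in_diag s b -> all (in_diag s) (rim_from s f b).
Proof.
move=> Hs; elim: f b => [|f IH] [i j] //= Hb; rewrite Hb /=.
case: ifP => H; first by apply: IH.
case: i Hb {H} => [|i] // Hb; apply: IH.
rewrite /in_diag /=; apply: leq_trans Hb _; exact: sorted_nthS.
Qed.

Lemma rim_idx s f b x0 t : t < size (rim_from s f b) ->
  (nth x0 (rim_from s f b) t).1 + t + b.2 = b.1 + (nth x0 (rim_from s f b) t).2.
Proof.
elim: f b t => [|f IH] [i j] [|t] //=; first by rewrite addn0.
case: ifP => _.
  move/IH => /= H; lia.
case: i => [|i] //= /IH /= H; lia.
Qed.

Lemma rimS s f i j : rim_from s f.+1 (i,j) = (i,j) ::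
  (if j.+1 < nth 0 s i then rim_from s f (i, j.+1)
   else if i is i'.+1 then rim_from s f (i',j) else [::]).
Proof. by []. Qed.

Lemma last_rim s f b b' : last b (rim_from s f.+1 b') = last b' (rim_from s f.+1 b').
Proof. by case: b' => i j; rewrite rimS. Qed.

Lemma head_rim s f b : b.2 \in map snd (rim_from s f.+1 b).
Proof. by case: b => i j; rewrite rimS map_cons mem_head. Qed.

Lemma mem_snd_cons (y : nat) (b : nat * nat) P : (y \in map snd (b :: P)) = (y == b.2) || (y \in map snd P).
Proof. by rewrite /= inE. Qed.

Lemma last_cons' (b : nat * nat) P : last b (b :: P) = last b P.
Proof. by []. Qed.

Lemma rim_cols s f b y :
  (y \in map snd (rim_from s f.+1 b)) = (b.2 <= y <= (last b (rim_from s f.+1 b)).2).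
Proof.
elim: f b y => [|f IH] [i j] y.
  rewrite rimS; case: ifP => _; last case: i => [|i]; rewrite /= inE; apply/idP/idP; lia.
rewrite rimS mem_snd_cons last_cons'; case: ifP => _.
  have := IH (i, j.+1) j.+1; rewrite (head_rim s f (i, j.+1)) => H0.
  rewrite IH last_rim; move: H0 => /= H0; apply/idP/idP; lia.
case: i => [|i].
  rewrite /= ?in_nil ?orbF; apply/idP/idP; lia.
have := IH (i, j) j; rewrite (head_rim s f (i, j)) => H0.
rewrite IH last_rim; move: H0 => /= H0; apply/idP/idP; lia.
Qed.

Lemma ncols_eq R M : (forall y, (y \in map snd R) = (y <= M)) -> ncols R = M.+1.
Proof.
move=> H; rewrite /ncols.
have := @uniq_size_uniq _ (iota 0 M.+1) (undup (map snd R)) (iota_uniq 0 M.+1).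
rewrite undup_uniq size_iota => H1; apply/eqP; rewrite -H1 //.
by move=> y; rewrite mem_undup H mem_iota.
Qed.

Lemma strip_form (n : nat) s R : 0 < size s -> R_strip n s = Some R -> R != [::] ->
  exists f, R = rim_from s f.+1 ((size s).-1, 0) /\ size R = 2 * (size s - n - 1).
Proof.
move=> Hs; rewrite /R_strip; case: ifP => // Hk [] EM R0.
have SZ : size R = 2 * (size s - n - 1) by rewrite -EM size_takel.
have Er : rim s = rim_from s (sumn s) ((size s).-1, 0) by case: s Hs {Hk EM R0 SZ}.
move: EM; rewrite Er take_rim_from; case: (minn _ _) => [|f] EM.
  by rewrite -EM in R0.
by exists f.
Qed.

Theorem lemma2p1 (n : nat) (mu nu lam : seq nat) (Rmu Rnu : seq (nat * nat)) :
  is_partition mu -> is_partition nu -> is_partition lam ->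
  n < size mu -> n < size nu ->
  R_strip n mu = Some Rmu -> Rmu != [::] -> diag_remove mu nu Rmu ->
  R_strip n nu = Some Rnu -> Rnu != [::] -> diag_remove nu lam Rnu ->
  ncols Rnu < ncols Rmu.
Proof.
move=> Pmu Pnu _ Hm Hn Smu Rm0 Dmu Snu Rn0 _.
have [Snu' Pnu'] := andP Pnu.
have Hsz : size nu <= size mu.
  rewrite leqNgt; apply/negP => H.
  have := Dmu (size mu, 0); rewrite /in_diag /= (nth_default 0 (leqnn (size mu))).
  by rewrite (allP Pnu' _ (mem_nth 0 H)).
have [f [EM SzM]] := strip_form n mu Rmu (leq_ltn_trans (leq0n n) Hm) Smu Rm0.
have [g [EN SzN]] := strip_form n nu Rnu (leq_ltn_trans (leq0n n) Hn) Snu Rn0.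
set bm := ((size mu).-1, 0) in EM.
set bn := ((size nu).-1, 0) in EN.
set L := last bm Rmu.
set L' := last bn Rnu.
have Cm : ncols Rmu = L.2.+1 by apply: ncols_eq => y; rewrite EM rim_cols -EM.
have Cn : ncols Rnu = L'.2.+1 by apply: ncols_eq => y; rewrite EN rim_cols -EN.
have Rm_pos : 0 < size Rmu by case: Rmu Rm0 {EM SzM Dmu Smu L Cm}.
have LI : L.1 + (size Rmu).-1 + 0 = (size mu).-1 + L.2.
  rewrite /L -(nth_last bm); rewrite EM in Rm_pos *.
  by rewrite rim_idx ?prednK.
have Lin : L \in Rmu by rewrite /L -(nth_last bm) mem_nth // prednK.
have Lnu : in_diag nu L = false by rewrite Dmu Lin andbF.
rewrite Cm Cn ltnS leqNgt; apply/negP => Hle.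
have : L.2 \in map snd Rnu by rewrite EN rim_cols -EN /= -/L'; lia.
case/(nthP 0) => t; rewrite size_map => Ht; rewrite (nth_map bn) // => HX.
set X := nth bn Rnu t in HX.
have XI : X.1 + t + 0 = (size nu).-1 + X.2 by rewrite /X EN rim_idx // -EN.
have Xin : in_diag nu X.
  have bnin : in_diag nu bn.
    by rewrite /in_diag /= (allP Pnu') // mem_nth // prednK // (leq_ltn_trans (leq0n n) Hn).
  have := rim_diag nu g.+1 bn Snu' bnin; rewrite -EN => /allP; apply; exact: mem_nth.
have XL : X.1 < L.1.
  rewrite ltnNge; apply/negP => H.
  move: Lnu; rewrite /in_diag -HX; suff -> : X.2 < nth 0 nu L.1 by [].
  apply: leq_trans Xin _; exact: sorted_nth_mono.
lia.
Qed.
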